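(* Let $\mathfrak g$ be of type $A_n$. For every $b\in\mathcal B(\infty)$ and $i\in I$, $\widetilde e_i^\ast(b)\in\mathcal B(\infty)\cup\{\mathbf 0\}$ and $\widetilde f_i^\ast(b)\in\mathcal B(\infty)$.
   Context: $I=\{1,\dots,n\}$. $\mathcal I=\{(s,t)\in\mathbb Z_{>0}\times I:s+t\le n+1\}$; $\mathcal B(\infty)$ is the set of $b=(b_{s,t})_{(s,t)\in\mathcal I}\in\mathbb Z_{\ge0}^{\mathcal I}$ with $b_{1,k}\ge b_{2,k-1}\ge\dots\ge b_{k,1}$ for $1\le k\le n$. Convention: $b_{s,t}=0$, $\mathbf e_{s,t}=0$ for $(s,t)\notin\mathcal I$. $\partial^\ast_{s,t}(b)=b_{s-1,t}-b_{s-1,t+1}-b_{s,t-1}+b_{s,t}$. For $1\le k\le i$: $\Sigma^\ast_k(b)=\sum_{t=1}^k\partial^\ast_{t,i+1-t}(b)$; $\varepsilon_i^\ast(b)=\max_k\Sigma_k^\ast(b)$; $m_i^\ast(b)$, $M_i^\ast(b)$ the smallest and largest maximizing $k$. $\widetilde f_i^\ast(b)=b+\sum_{t=1}^{m_i^\ast(b)}(\mathbf e_{t,i+1-t}-\mathbf e_{t-1,i+1-t})$; $\widetilde e_i^\ast(b)=b-\sum_{t=1}^{M_i^\ast(b)}(\mathbf e_{t,i+1-t}-\mathbf e_{t-1,i+1-t})$ if $\varepsilon_i^\ast(b)>0$, else $\widetilde e_i^\ast(b)=\mathbf 0$ (formal symbol). *)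

(* Defs.v *)
From mathcomp Require Import all_boot all_order all_algebra.
Set Implicit Arguments. Unset Strict Implicit. Unset Printing Implicit Defensive.
Import Order.TTheory GRing.Theory Num.Theory.
Local Open Scope ring_scope.

(* An array b = (b_{s,t}) is represented as a total function nat -> nat -> int;
   membership in B(infinity) requires it to vanish outside the index set,
   matching the convention b_{s,t} = 0 for (s,t) outside the index set. *)
Definition arr := nat -> nat -> int.

Definition inI (n s t : nat) : bool := [&& 0 < s, 0 < t & s + t <= n.+1]%N.

Definition inB (n : nat) (b : arr) : Prop :=
  [/\ (forall s t, ~~ inI n s t -> b s t = 0),
      (forall s t, inI n s t -> 0 <= b s t) &
      (forall k j, (1 <= j)%N -> (j < k)%N -> (k <= n)%N ->
         b j.+1 (k - j)%N <= b j (k.+1 - j)%N)].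

Definition evec (n s t : nat) : arr :=
  fun s' t' => if inI n s t && (s' == s) && (t' == t) then 1 else 0.

(* partial^*_{s,t}(b) = b_{s-1,t} - b_{s-1,t+1} - b_{s,t-1} + b_{s,t}
   (only used with s, t >= 1) *)
Definition dstar (b : arr) (s t : nat) : int :=
  b s.-1 t - b s.-1 t.+1 - b s t.-1 + b s t.

Definition Sigma (b : arr) (i k : nat) : int :=
  \sum_(1 <= t < k.+1) dstar b t (i.+1 - t)%N.

Definition epsstar (b : arr) (i : nat) : int :=
  \big[Order.max/Sigma b i 1]_(1 <= k < i.+1) Sigma b i k.

Definition mstar (b : arr) (i : nat) : nat :=
  (find (fun k => Sigma b i k == epsstar b i) (iota 1 i)).+1.

Definition Mstar (b : arr) (i : nat) : nat :=
  (i - find (fun k => Sigma b i k == epsstar b i) (rev (iota 1 i)))%N.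

Definition shiftvec (n i k : nat) : arr :=
  fun s' t' => \sum_(1 <= t < k.+1)
     (evec n t (i.+1 - t)%N s' t' - evec n t.-1 (i.+1 - t)%N s' t').

Definition fstar (n i : nat) (b : arr) : arr :=
  fun s t => b s t + shiftvec n i (mstar b i) s t.

(* None represents the formal symbol 0 *)
Definition estar (n i : nat) (b : arr) : option arr :=
  if 0 < epsstar b i then Some (fun s t => b s t - shiftvec n i (Mstar b i) s t)
  else None.

Definition inB0 (n : nat) (x : option arr) : Prop :=
  match x with Some b => inB n b | None => True end.

(* Main.v *)
Require Import Defs.
From mathcomp Require Import all_boot all_order all_algebra zify.
Import Order.TTheory GRing.Theory Num.Theory.
Local Open Scope ring_scope.

Definition sv (i k s t : nat) : int :=
  (if [&& (s + t == i.+1)%N, (1 <= s)%N & (s <= k)%N] then 1 else 0)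
  - (if [&& (s + t == i)%N, (1 <= s)%N & (s < k)%N] then 1 else 0).

Lemma shiftvecE n i k s t : (k <= i)%N -> (i <= n)%N ->
  shiftvec n i k s t = sv i k s t.
Proof.
move=> + Hin; elim: k => [|k IH] Hk.
  rewrite /shiftvec big_geq // /sv; repeat case: ifP; move=> *; lia.
rewrite /shiftvec big_nat_recr //= -/(shiftvec n i k s t) IH; last by lia.
rewrite /sv /evec /inI.
repeat case: ifP; move=> *; lia.
Qed.

Lemma Sigma_closed b i k : (forall t, b 0%N t = 0) -> (k <= i)%N ->
  Sigma b i k = b k (i.+1 - k)%N - b k (i - k)%N.
Proof.
move=> H0; elim: k => [|k IH] Hk.
  by rewrite /Sigma big_geq // !H0 subrr.
rewrite /Sigma big_nat_recr //= -/(Sigma b i k) IH; last by lia.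
rewrite /dstar /= subSS.
have -> : (i - k).+1 = (i.+1 - k)%N by lia.
have -> : (i - k).-1 = (i - k.+1)%N by lia.
lia.
Qed.

Lemma bigmax_gen (F : nat -> int) x0 m d a : (m - a)%N = d ->
  [/\ x0 <= \big[Order.max/x0]_(a <= k < m) F k,
      (forall k, (a <= k < m)%N -> F k <= \big[Order.max/x0]_(a <= k < m) F k) &
      (\big[Order.max/x0]_(a <= k < m) F k = x0 \/
       exists k, (a <= k < m)%N /\ \big[Order.max/x0]_(a <= k < m) F k = F k)].
Proof.
elim: d a => [|d IH] a Hd.
  by rewrite big_geq; [split => //; [move=> k; lia | left] | lia].
rewrite big_ltn; last by lia.
have [IH1 IH2 IH3] := IH a.+1 ltac:(lia).
set B := \big[_/_]_(_ <= _ < _) _ in IH1 IH2 IH3 *.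
rewrite /Order.max; case: ifP => Hlt; split.
- lia.
- move=> k Hk; case: (k =P a) => [->|ne]; first lia.
  have := IH2 k; lia.
- case: IH3 => [->|[k [Hk ->]]]; first by left.
  by right; exists k; split => //; lia.
- lia.
- move=> k Hk; case: (k =P a) => [->|ne]; first lia.
  have := IH2 k; lia.
- by right; exists a; split => //; lia.
Qed.

Lemma eps_facts b i : (1 <= i)%N ->
  (forall k, (1 <= k <= i)%N -> Sigma b i k <= epsstar b i) /\
  exists k, (1 <= k <= i)%N /\ Sigma b i k = epsstar b i.
Proof.
move=> Hi.
have [H1 H2 H3] := bigmax_gen (Sigma b i) (Sigma b i 1) (i.+1) i 1 ltac:(lia).
rewrite /epsstar; split.
  move=> k Hk; apply: H2; lia.
case: H3 => [->|[k [Hk ->]]].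
  by exists 1%N; split => //; lia.
by exists k; split => //; lia.
Qed.

Lemma mstar_facts b i : (1 <= i)%N ->
  [/\ (1 <= mstar b i <= i)%N, Sigma b i (mstar b i) = epsstar b i &
      (1 < mstar b i)%N -> Sigma b i (mstar b i).-1 < epsstar b i].
Proof.
move=> Hi; have [Hle [k [Hk Hkeq]]] := eps_facts b i Hi.
set P := fun k => Sigma b i k == epsstar b i.
have hasP : has P (iota 1 i).
  apply/hasP; exists k; last by apply/eqP.
  rewrite mem_iota; lia.
have Hf := hasP; rewrite has_find size_iota in Hf.
have Hn := nth_find 0%N hasP.
rewrite nth_iota // in Hn.
rewrite /mstar -/P; split.
- lia.
- by apply/eqP; rewrite add1n in Hn.
- move=> Hm /=.
  have Hb := before_find 0%N (a := P) (s := iota 1 i) (i := (find P (iota 1 i)).-1) ltac:(lia).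
  rewrite nth_iota in Hb; last by lia.
  have -> : (find P (iota 1 i)) = (1 + (find P (iota 1 i)).-1)%N by lia.
  have := Hle (1 + (find P (iota 1 i)).-1)%N ltac:(lia).
  move: Hb; rewrite /P => /eqP; lia.
Qed.

Lemma Mstar_facts b i : (1 <= i)%N ->
  [/\ (1 <= Mstar b i <= i)%N, Sigma b i (Mstar b i) = epsstar b i &
      (Mstar b i < i)%N -> Sigma b i (Mstar b i).+1 < epsstar b i].
Proof.
move=> Hi; have [Hle [k [Hk Hkeq]]] := eps_facts b i Hi.
set P := fun k => Sigma b i k == epsstar b i.
have hasP : has P (rev (iota 1 i)).
  rewrite has_rev; apply/hasP; exists k; last by apply/eqP.
  rewrite mem_iota; lia.
have Hf := hasP; rewrite has_find size_rev size_iota in Hf.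
have Hn := nth_find 0%N hasP.
rewrite nth_rev size_iota // nth_iota in Hn; last by lia.
rewrite /Mstar -/P; split.
- lia.
- apply/eqP; move: Hn; rewrite /P.
  by have -> : (1 + (i - (find P (rev (iota 1 i))).+1) = i - find P (rev (iota 1 i)))%N by lia.
- move=> Hm /=.
  have Hb := before_find 0%N (a := P) (s := rev (iota 1 i)) (i := (find P (rev (iota 1 i))).-1) ltac:(lia).
  rewrite nth_rev size_iota in Hb; last by lia.
  rewrite nth_iota in Hb; last by lia.
  have E : (1 + (i - (find P (rev (iota 1 i))).-1.+1) = (i - find P (rev (iota 1 i))).+1)%N by lia.
  rewrite E in Hb.
  have := Hle (i - find P (rev (iota 1 i))).+1 ltac:(lia).
  move: Hb; rewrite /P => /eqP; lia.
Qed.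

Lemma b_nonneg n b s t : inB n b -> 0 <= b s t.
Proof.
case=> H1 H2 _; case E: (inI n s t); first exact: H2.
by rewrite H1 ?E.
Qed.

Lemma b0 n b t : inB n b -> b 0%N t = 0.
Proof. by case=> H1 _ _; rewrite H1. Qed.

Lemma diag2 n b s t t' : inB n b -> (1 <= s)%N -> t' = t.+1 -> (s + t <= n)%N ->
  b s.+1 t <= b s t'.
Proof.
move=> Hb Hs -> Hst; case: (posnP t) => [->|Ht].
  case: Hb => H1 H2 _; rewrite H1; last by rewrite /inI; lia.
  apply: H2; rewrite /inI; lia.
case: Hb => _ _ H3; have := H3 (s + t)%N s Hs ltac:(lia) Hst.
have -> : (s + t - s = t)%N by lia.
by have -> : ((s + t).+1 - s = t.+1)%N by lia.
Qed.

Lemma chain n b u s t : inB n b -> (1 <= s)%N -> (1 <= t)%N -> (s + u + t <= n.+1)%N ->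
  b (s + u)%N t <= b s (t + u)%N.
Proof.
move=> Hb Hs; elim: u t => [|u IH] t Ht Hn.
  by rewrite !addn0.
have H1 := IH t.+1 ltac:(lia) ltac:(lia).
have H2 := diag2 n b (s + u)%N t t.+1 Hb ltac:(lia) (erefl _) ltac:(lia).
rewrite addSn in H1; rewrite !addnS; lia.
Qed.

Lemma inB_f n b i m c : inB n b -> (1 <= m <= i)%N -> (i <= n)%N ->
  (forall s t, c s t = b s t + sv i m s t) ->
  (forall j k, (1 <= j)%N -> j.+1 = m -> k.+1 = i -> b j.+1 (k - j)%N < b j (k.+1 - j)%N) ->
  (forall s t, (1 <= s)%N -> (s < m)%N -> (s + t)%N = i -> 1 <= b s t) ->
  inB n c.
Proof.
move=> Hb Hm Hi Hc Hstr Hpos; have Hb' := Hb; case: Hb' => H1 H2 H3; split.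
- move=> s t H; rewrite Hc H1 // /sv; rewrite /inI in H; repeat case: ifP; lia.
- move=> s t H; rewrite Hc; have := H2 s t H; have := Hpos s t; rewrite /sv /inI in H *.
  repeat case: ifP; lia.
- move=> k j H1j Hjk Hkn; rewrite !Hc /sv; have := H3 k j H1j Hjk Hkn.
  have := Hstr j k H1j; repeat case: ifP; lia.
Qed.

Lemma inB_e n b i m c : inB n b -> (1 <= m <= i)%N -> (i <= n)%N ->
  (forall s t, c s t = b s t - sv i m s t) ->
  (forall j k, (1 <= j)%N -> j = m -> k = i -> (j < k)%N -> b j.+1 (k - j)%N < b j (k.+1 - j)%N) ->
  (forall s t, (1 <= s)%N -> (s <= m)%N -> (s + t)%N = i.+1 -> 1 <= b s t) ->
  inB n c.
Proof.
move=> Hb Hm Hi Hc Hstr Hpos; have Hb' := Hb; case: Hb' => H1 H2 H3; split.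
- move=> s t H; rewrite Hc H1 // /sv; rewrite /inI in H; repeat case: ifP; lia.
- move=> s t H; rewrite Hc; have := H2 s t H; have := Hpos s t; rewrite /sv /inI in H *.
  repeat case: ifP; lia.
- move=> k j H1j Hjk Hkn; rewrite !Hc /sv; have := H3 k j H1j Hjk Hkn.
  have := Hstr j k H1j; repeat case: ifP; lia.
Qed.

Theorem proposition6p4 (n : nat) (b : arr) (i : nat) :
  inB n b -> (1 <= i <= n)%N ->
  inB0 n (estar n i b) /\ inB n (fstar n i b).
Proof.
move=> Hb Hi.
have Hi1 : (1 <= i)%N by lia.
have Hin : (i <= n)%N by lia.
have H0 : forall t, b 0%N t = 0 by move=> t; apply: b0 Hb.
split.
- rewrite /estar; case: ifP => Heps //=.
  have [HM1 HM2 HM3] := Mstar_facts b i Hi1.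
  set M := Mstar b i in HM1 HM2 HM3 *.
  apply: (inB_e n b i M _ Hb HM1 Hin).
  + by move=> s t; rewrite shiftvecE //; lia.
  + move=> j k Hj -> -> HMi.
    have := HM3 HMi; rewrite -HM2.
    rewrite (Sigma_closed b i M.+1 H0 HMi) (Sigma_closed b i M H0 ltac:(lia)) subSS.
    have := diag2 n b M (i - M.+1)%N (i - M)%N Hb ltac:(lia) ltac:(lia) ltac:(lia).
    lia.
  + move=> s t Hs HsM Hst.
    have C := chain n b (M - s)%N s (i.+1 - M)%N Hb Hs ltac:(lia) ltac:(lia).
    have -> : t = (i.+1 - M + (M - s))%N by lia.
    have E : (s + (M - s))%N = M by lia.
    rewrite E in C.
    move: Heps; rewrite -HM2 (Sigma_closed b i M H0 ltac:(lia)).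
    have := b_nonneg n b M (i - M)%N Hb.
    lia.
- have [Hm1 Hm2 Hm3] := mstar_facts b i Hi1.
  set m := mstar b i in Hm1 Hm2 Hm3 *.
  have Hstr : forall j k, (1 <= j)%N -> j.+1 = m -> k.+1 = i ->
      b j.+1 (k - j)%N < b j (k.+1 - j)%N.
    move=> j k Hj Hjm Hki.
    have := Hm3 ltac:(lia); rewrite -Hm2 -Hjm /=.
    rewrite (Sigma_closed b i j.+1 H0 ltac:(lia)) (Sigma_closed b i j H0 ltac:(lia)).
    rewrite -Hki !subSS.
    have := diag2 n b j (k.+1 - j)%N (k.+2 - j)%N Hb Hj ltac:(lia) ltac:(lia).
    lia.
  apply: (inB_f n b i m _ Hb Hm1 Hin).
  + by move=> s t; rewrite /fstar shiftvecE //; lia.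
  + exact: Hstr.
  + move=> s t Hs Hsm Hst.
    set j := m.-1.
    have Hmj : m = j.+1 by rewrite /j; lia.
    have C := chain n b (j - s)%N s (i - j)%N Hb Hs ltac:(lia) ltac:(lia).
    have E1 : (s + (j - s))%N = j by lia.
    have E2 : (i - j + (j - s))%N = t by lia.
    rewrite E1 E2 in C.
    have S := Hstr j i.-1 ltac:(lia) (esym Hmj) ltac:(lia).
    rewrite prednK // in S.
    have := b_nonneg n b j.+1 (i.-1 - j)%N Hb.
    lia.
Qed.
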